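(* Let $f(z)=z+\sum_{n\ge2}a_nz^n$ belong to $\Omega$. Then for every $\mu\in\mathbb{C}$, $$|a_3-\mu a_2^2|\le \tfrac14\max\{1,|\mu|\},$$ and the inequality is sharp.
   Context: $\Delta=\{z\in\mathbb{C}:|z|<1\}$. $\mathcal{A}$ is the class of functions $f$ analytic in $\Delta$ with $f(0)=0$, $f'(0)=1$. $\Omega$ is the class of $f\in\mathcal{A}$ with $|zf'(z)-f(z)|<\tfrac12$ for all $z\in\Delta$. *)

(* Defs.v *)
From Stdlib Require Import Reals Lra.
Open Scope R_scope.

Definition Cplx : Type := (R * R)%type.

Definition Cmk (x y : R) : Cplx := (x, y).
Definition C0 : Cplx := (0, 0).
Definition C1 : Cplx := (1, 0).
Definition Cadd (z w : Cplx) : Cplx := (fst z + fst w, snd z + snd w).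
Definition Copp (z : Cplx) : Cplx := (- fst z, - snd z).
Definition Csub (z w : Cplx) : Cplx := Cadd z (Copp w).
Definition Cmul (z w : Cplx) : Cplx :=
  (fst z * fst w - snd z * snd w, fst z * snd w + snd z * fst w).
Fixpoint Cpow (z : Cplx) (n : nat) : Cplx :=
  match n with O => C1 | S k => Cmul z (Cpow z k) end.
Definition Cnorm (z : Cplx) : R := sqrt (fst z * fst z + snd z * snd z).

Fixpoint Cpartial (a : nat -> Cplx) (z : Cplx) (n : nat) : Cplx :=
  match n with O => C0 | S k => Cadd (Cpartial a z k) (Cmul (a k) (Cpow z k)) end.

Definition Cseries_sum (a : nat -> Cplx) (z l : Cplx) : Prop :=
  forall eps : R, 0 < eps -> exists N : nat, forall n : nat, (N <= n)%nat ->
    Cnorm (Csub (Cpartial a z n) l) < eps.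

Definition Cderiv (f : Cplx -> Cplx) (z d : Cplx) : Prop :=
  forall eps : R, 0 < eps -> exists delta : R, 0 < delta /\
    forall h : Cplx, 0 < Cnorm h < delta ->
      Cnorm (Csub (Csub (f (Cadd z h)) (f z)) (Cmul d h)) <= eps * Cnorm h.

Definition in_Omega (f : Cplx -> Cplx) (a : nat -> Cplx) : Prop :=
  a 0%nat = C0 /\ a 1%nat = C1 /\
  (forall z : Cplx, Cnorm z < 1 -> Cseries_sum a z (f z)) /\
  (forall z : Cplx, Cnorm z < 1 ->
     exists d : Cplx, Cderiv f z d /\ Cnorm (Csub (Cmul z d) (f z)) < / 2).

(* Main.v *)
From Stdlib Require Import Reals Lra Psatz Classical ClassicalEpsilon.
From Coquelicot Require Import Coquelicot.
Require Import Defs.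
Open Scope R_scope.

Definition nsq (z : Cplx) : R := fst z * fst z + snd z * snd z.
Definition Cconj' (z : Cplx) : Cplx := (fst z, - snd z).
Definition Csc (t : R) (z : Cplx) : Cplx := (t * fst z, t * snd z).

Lemma nsq_ge0 z : 0 <= nsq z.
Proof. unfold nsq; nra. Qed.

Lemma Cnorm_Cmod z : Cnorm z = Cmod z.
Proof. unfold Cnorm, Cmod; f_equal; simpl; ring. Qed.

Lemma Cnorm_ge0 z : 0 <= Cnorm z.
Proof. apply sqrt_pos. Qed.

Lemma Cnorm_sq z : Cnorm z * Cnorm z = nsq z.
Proof. unfold Cnorm. rewrite sqrt_sqrt; [reflexivity| apply nsq_ge0]. Qed.

Lemma Cnorm_mul z w : Cnorm (Cmul z w) = Cnorm z * Cnorm w.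
Proof. rewrite !Cnorm_Cmod. apply Cmod_mult. Qed.

Lemma Cnorm_add z w : Cnorm (Cadd z w) <= Cnorm z + Cnorm w.
Proof. rewrite !Cnorm_Cmod. apply Cmod_triangle. Qed.

Lemma Cnorm_opp z : Cnorm (Copp z) = Cnorm z.
Proof. rewrite !Cnorm_Cmod. apply Cmod_opp. Qed.

Lemma Cnorm_sub z w : Cnorm (Csub z w) <= Cnorm z + Cnorm w.
Proof. unfold Csub. rewrite <- (Cnorm_opp w). apply Cnorm_add. Qed.

Lemma Cnorm_le_sq z B : 0 <= B -> nsq z <= B * B -> Cnorm z <= B.
Proof.
  intros HB H. unfold Cnorm. rewrite <- (sqrt_square B) by lra.
  apply sqrt_le_1_alt. unfold nsq in H. lra.
Qed.

Lemma Cnorm_sq_le z B : Cnorm z <= B -> nsq z <= B * B.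
Proof. intros H. rewrite <- Cnorm_sq. pose proof (Cnorm_ge0 z). nra. Qed.

Lemma fst_le_Cnorm z : Rabs (fst z) <= Cnorm z.
Proof. rewrite Cnorm_Cmod. apply re_le_Cmod. Qed.

Lemma snd_le_Cnorm z : Rabs (snd z) <= Cnorm z.
Proof.
  replace (Cnorm z) with (Cnorm (snd z, fst z)).
  apply (fst_le_Cnorm (snd z, fst z)). unfold Cnorm; simpl; f_equal; ring.
Qed.

Lemma Cnorm_le_comp z : Cnorm z <= Rabs (fst z) + Rabs (snd z).
Proof.
  apply Cnorm_le_sq. pose proof (Rabs_pos (fst z)); pose proof (Rabs_pos (snd z)); lra.
  unfold nsq.
  assert (E1: Rabs (fst z) * Rabs (fst z) = fst z * fst z) by (rewrite <- Rabs_mult; apply Rabs_pos_eq; nra).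
  assert (E2: Rabs (snd z) * Rabs (snd z) = snd z * snd z) by (rewrite <- Rabs_mult; apply Rabs_pos_eq; nra).
  pose proof (Rabs_pos (fst z)); pose proof (Rabs_pos (snd z)); nra.
Qed.

Lemma Cnorm_Csc t z : Cnorm (Csc t z) = Rabs t * Cnorm z.
Proof.
  unfold Cnorm, Csc, nsq; simpl.
  replace (t * fst z * (t * fst z) + t * snd z * (t * snd z)) with ((t*t) * (fst z * fst z + snd z * snd z)) by ring.
  rewrite sqrt_mult_alt by nra. f_equal.
  apply sqrt_Rsqr_abs.
Qed.
Definition CL (s : nat -> Cplx) (l : Cplx) : Prop :=
  forall eps : R, 0 < eps -> exists N : nat, forall n : nat, (N <= n)%nat ->
    Cnorm (Csub (s n) l) < eps.

Lemma CL_add s t l m : CL s l -> CL t m -> CL (fun n => Cadd (s n) (t n)) (Cadd l m).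
Proof.
  intros Hs Ht eps He.
  destruct (Hs (eps/2)) as [N1 H1]; [lra|]. destruct (Ht (eps/2)) as [N2 H2]; [lra|].
  exists (Nat.max N1 N2). intros n Hn.
  specialize (H1 n ltac:(lia)). specialize (H2 n ltac:(lia)).
  replace (Csub (Cadd (s n) (t n)) (Cadd l m)) with (Cadd (Csub (s n) l) (Csub (t n) m)).
  pose proof (Cnorm_add (Csub (s n) l) (Csub (t n) m)). lra.
  unfold Csub, Cadd, Copp; simpl; f_equal; ring.
Qed.

Lemma CL_cmul c s l : CL s l -> CL (fun n => Cmul c (s n)) (Cmul c l).
Proof.
  intros Hs eps He.
  destruct (Hs (eps / (Cnorm c + 1))) as [N H1].
  { apply Rdiv_lt_0_compat; [lra|]. pose proof (Cnorm_ge0 c); lra. }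
  exists N. intros n Hn. specialize (H1 n Hn).
  replace (Csub (Cmul c (s n)) (Cmul c l)) with (Cmul c (Csub (s n) l)).
  rewrite Cnorm_mul. pose proof (Cnorm_ge0 c). pose proof (Cnorm_ge0 (Csub (s n) l)).
  apply Rle_lt_trans with (Cnorm c * (eps / (Cnorm c + 1))).
  apply Rmult_le_compat_l; lra.
  apply Rlt_le_trans with ((Cnorm c + 1) * (eps / (Cnorm c + 1))).
  apply Rmult_lt_compat_r. apply Rdiv_lt_0_compat; lra. lra.
  right; field; lra.
  unfold Csub, Cadd, Copp, Cmul; simpl; f_equal; ring.
Qed.

Lemma CL_const c : CL (fun _ => c) c.
Proof.
  intros eps He. exists O. intros n _.
  replace (Csub c c) with ((0,0) : Cplx). unfold Cnorm; simpl.
  replace (0*0+0*0) with 0 by ring. rewrite sqrt_0. lra.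
  unfold Csub, Cadd, Copp; simpl; f_equal; ring.
Qed.

Lemma CL_ext s t l N0 : (forall n, (N0 <= n)%nat -> s n = t n) -> CL s l -> CL t l.
Proof.
  intros E Hs eps He. destruct (Hs eps He) as [N H]. exists (Nat.max N N0).
  intros n Hn. rewrite <- E by lia. apply H. lia.
Qed.

Lemma CL_le s l B N0 : CL s l -> (forall n, (N0 <= n)%nat -> Cnorm (s n) <= B) -> Cnorm l <= B.
Proof.
  intros Hs Hb. apply Rnot_lt_le. intro Hlt.
  destruct (Hs (Cnorm l - B)) as [N H]; [lra|].
  specialize (H (Nat.max N N0) ltac:(lia)). specialize (Hb (Nat.max N N0) ltac:(lia)).
  pose proof (Cnorm_sub l (s (Nat.max N N0))).
  replace (Csub l (s (Nat.max N N0))) with (Copp (Csub (s (Nat.max N N0)) l)) in H0.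
  rewrite Cnorm_opp in H0.
  assert (Cnorm l <= Cnorm (Csub (s (Nat.max N N0)) l) + Cnorm (s (Nat.max N N0))).
  { replace l with (Cadd (Copp (Csub (s (Nat.max N N0)) l)) (s (Nat.max N N0))) at 1.
    rewrite <- (Cnorm_opp (Csub _ l)). apply Cnorm_add.
    unfold Csub, Cadd, Copp; simpl. destruct l; simpl; f_equal; ring. }
  lra.
  unfold Csub, Cadd, Copp; simpl; f_equal; ring.
Qed.



Fixpoint csum (F : nat -> Cplx) (M : nat) : Cplx :=
  match M with O => C0 | S k => Cadd (csum F k) (F k) end.

Fixpoint rsum (F : nat -> R) (M : nat) : R :=
  match M with O => 0 | S k => rsum F k + F k end.

Lemma CL_csum (F : nat -> nat -> Cplx) (L : nat -> Cplx) M :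
  (forall k, CL (F k) (L k)) -> CL (fun n => csum (fun k => F k n) M) (csum L M).
Proof.
  intros H. induction M as [|M IH]; simpl.
  - apply CL_const.
  - apply CL_add; auto.
Qed.

Lemma fst_csum F M : fst (csum F M) = rsum (fun k => fst (F k)) M.
Proof. induction M; simpl; auto. rewrite IHM; auto. Qed.
Lemma snd_csum F M : snd (csum F M) = rsum (fun k => snd (F k)) M.
Proof. induction M; simpl; auto. rewrite IHM; auto. Qed.

Lemma Cnorm_csum F M : Cnorm (csum F M) <= rsum (fun k => Cnorm (F k)) M.
Proof.
  induction M; simpl.
  - unfold Cnorm, C0; simpl. replace (0*0+0*0) with 0 by ring. rewrite sqrt_0; lra.
  - pose proof (Cnorm_add (csum F M) (F M)). lra.
Qed.

Lemma rsum_le F G M : (forall k, (k < M)%nat -> F k <= G k) -> rsum F M <= rsum G M.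
Proof.
  induction M; simpl; intros H; [lra|].
  assert (rsum F M <= rsum G M) by (apply IHM; intros; apply H; lia).
  specialize (H M ltac:(lia)). lra.
Qed.

Lemma rsum_ge0 F M : (forall k, 0 <= F k) -> 0 <= rsum F M.
Proof. induction M; simpl; intros H; [lra|]. specialize (IHM H). specialize (H M). lra. Qed.

Lemma rsum_ext F G M : (forall k, (k < M)%nat -> F k = G k) -> rsum F M = rsum G M.
Proof.
  induction M; simpl; intros H; auto. rewrite IHM by (intros; apply H; lia). rewrite H by lia. auto.
Qed.

Lemma Cnorm_C1 : Cnorm C1 = 1.
Proof. unfold Cnorm, C1; simpl. replace (1*1+0*0) with 1 by ring. apply sqrt_1. Qed.

Lemma Cnorm_pow z m : Cnorm (Cpow z m) = Cnorm z ^ m.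
Proof. induction m; simpl. apply Cnorm_C1. rewrite Cnorm_mul, IHm. auto. Qed.

Lemma Cnorm_real x : 0 <= x -> Cnorm (x, 0) = x.
Proof. intros. unfold Cnorm; simpl. replace (x*x+0*0) with (x*x) by ring. apply sqrt_square; auto. Qed.

Lemma rsum_single F M k : (k < M)%nat -> (forall j, 0 <= F j) -> F k <= rsum F M.
Proof.
  induction M; simpl; intros Hk H; [lia|].
  destruct (Nat.eq_dec k M) as [->|Hne].
  - pose proof (rsum_ge0 F M H). lra.
  - pose proof (IHM ltac:(lia) H). specialize (H M). lra.
Qed.

Lemma terms_bounded (f : Cplx -> Cplx) (a : nat -> Cplx) :
  (forall z, Cnorm z < 1 -> Cseries_sum a z (f z)) ->
  forall rho, 0 <= rho < 1 -> exists K, forall m, Cnorm (a m) * rho ^ m <= K.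
Proof.
  intros Hs rho Hr.
  assert (Hz : Cnorm (rho, 0) < 1) by (rewrite Cnorm_real; lra).
  destruct (Hs _ Hz 1 ltac:(lra)) as [N HN].
  exists (2 + rsum (fun m => Cnorm (a m) * rho ^ m) N).
  intros m.
  assert (Hnn : forall j, 0 <= Cnorm (a j) * rho ^ j).
  { intros j. apply Rmult_le_pos. apply Cnorm_ge0. apply pow_le; lra. }
  destruct (Nat.lt_ge_cases m N) as [Hm|Hm].
  - pose proof (rsum_single (fun m => Cnorm (a m) * rho ^ m) N m Hm Hnn). simpl in H. lra.
  - pose proof (HN m ltac:(lia)) as H1. pose proof (HN (S m) ltac:(lia)) as H2.
    simpl in H2.
    assert (E: Cmul (a m) (Cpow (rho, 0) m) = Csub (Csub (Cadd (Cpartial a (rho, 0) m) (Cmul (a m) (Cpow (rho, 0) m))) (f (rho,0))) (Csub (Cpartial a (rho, 0) m) (f (rho,0)))).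
    { unfold Csub, Cadd, Copp. destruct (Cmul (a m) (Cpow (rho, 0) m)), (Cpartial a (rho, 0) m), (f (rho, 0)); simpl; f_equal; ring. }
    pose proof (Cnorm_sub (Csub (Cadd (Cpartial a (rho, 0) m) (Cmul (a m) (Cpow (rho, 0) m))) (f (rho,0))) (Csub (Cpartial a (rho, 0) m) (f (rho,0)))).
    rewrite <- E, Cnorm_mul, Cnorm_pow, Cnorm_real in H by lra.
    pose proof (rsum_ge0 _ N Hnn). lra.
Qed.

Lemma radius_ge (f : Cplx -> Cplx) (a : nat -> Cplx) :
  (forall z, Cnorm z < 1 -> Cseries_sum a z (f z)) ->
  forall b : nat -> R, (forall n, Rabs (b n) <= Cnorm (a n)) ->
  forall x, Rabs x < 1 -> Rbar_lt (Rabs x) (CV_radius b).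
Proof.
  intros Hs b Hb x Hx.
  set (rho := (Rabs x + 1) / 2).
  assert (Hr : 0 <= rho < 1) by (pose proof (Rabs_pos x); unfold rho; lra).
  destruct (terms_bounded f a Hs rho Hr) as [K HK].
  assert (HE : Rbar_le rho (CV_radius b)).
  { destruct (CV_radius_bounded b) as [Hub _]. apply Hub. exists K. intros n.
    rewrite Rabs_mult, <- RPow_abs, (Rabs_pos_eq rho) by lra.
    eapply Rle_trans; [|apply (HK n)]. apply Rmult_le_compat_r. apply pow_le; lra. apply Hb. }
  destruct (CV_radius b) as [r| |]; simpl in *; auto; unfold rho in HE; lra.
Qed.

Lemma rsum_S_sum F n : rsum F (S n) = sum_f_R0 F n.
Proof. induction n. simpl; ring. simpl in *. rewrite <- IHn. ring. Qed.

Lemma Un_cv_rsum_inf F l : Un_cv (rsum F) l -> infinite_sum F l.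
Proof.
  intros H eps He. destruct (H eps He) as [N HN]. exists N. intros n Hn.
  rewrite <- rsum_S_sum. apply HN. lia.
Qed.


Lemma inf_Un_cv_rsum F l : infinite_sum F l -> Un_cv (rsum F) l.
Proof.
  intros H eps He. destruct (H eps He) as [N HN]. exists (S N). intros n Hn.
  destruct n as [|n]; [lia|]. rewrite rsum_S_sum. apply HN. lia.
Qed.

Lemma Un_cv_shift s l : Un_cv (fun n => s (S n)) l -> Un_cv s l.
Proof.
  intros H eps He. destruct (H eps He) as [N HN]. exists (S N). intros n Hn.
  destruct n as [|n]; [lia|]. apply HN. lia.
Qed.

Lemma Un_cv_const c : Un_cv (fun _ => c) c.
Proof. intros eps He. exists O. intros. unfold R_dist. replace (c - c) with 0 by ring. rewrite Rabs_R0. lra. Qed.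

Lemma CL_fst s l : CL s l -> Un_cv (fun n => fst (s n)) (fst l).
Proof.
  intros H eps He. destruct (H eps He) as [N HN]. exists N. intros n Hn.
  specialize (HN n Hn). unfold R_dist. pose proof (fst_le_Cnorm (Csub (s n) l)).
  assert (E: fst (Csub (s n) l) = fst (s n) - fst l) by (unfold Csub, Cadd, Copp; simpl; ring).
  rewrite E in H0. lra.
Qed.

Lemma CL_snd s l : CL s l -> Un_cv (fun n => snd (s n)) (snd l).
Proof.
  intros H eps He. destruct (H eps He) as [N HN]. exists N. intros n Hn.
  specialize (HN n Hn). unfold R_dist. pose proof (snd_le_Cnorm (Csub (s n) l)).
  assert (E: snd (Csub (s n) l) = snd (s n) - snd l) by (unfold Csub, Cadd, Copp; simpl; ring).
  rewrite E in H0. lra.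
Qed.

Lemma CL_comp s l : Un_cv (fun n => fst (s n)) (fst l) -> Un_cv (fun n => snd (s n)) (snd l) -> CL s l.
Proof.
  intros H1 H2 eps He. destruct (H1 (eps/2)) as [N1 HN1]; [lra|]. destruct (H2 (eps/2)) as [N2 HN2]; [lra|].
  exists (Nat.max N1 N2). intros n Hn. specialize (HN1 n ltac:(lia)). specialize (HN2 n ltac:(lia)).
  unfold R_dist in *. pose proof (Cnorm_le_comp (Csub (s n) l)).
  assert (E: fst (Csub (s n) l) = fst (s n) - fst l) by (unfold Csub, Cadd, Copp; simpl; ring).
  assert (E2: snd (Csub (s n) l) = snd (s n) - snd l) by (unfold Csub, Cadd, Copp; simpl; ring).
  rewrite E, E2 in H. lra.
Qed.

Lemma Cpow_Csc t u k : Cpow (Csc t u) k = Csc (t ^ k) (Cpow u k).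
Proof.
  induction k; simpl. unfold Csc, C1; simpl; f_equal; ring.
  rewrite IHk. unfold Csc, Cmul; simpl; f_equal; ring.
Qed.

Lemma Cnorm_Csc_unit t u : Cnorm u = 1 -> Cnorm (Csc t u) = Rabs t.
Proof. intros H. rewrite Cnorm_Csc, H. ring. Qed.

Definition bRe (a : nat -> Cplx) (u : Cplx) n := fst (Cmul (a n) (Cpow u n)).
Definition bIm (a : nat -> Cplx) (u : Cplx) n := snd (Cmul (a n) (Cpow u n)).

Lemma fst_partial a u t N : fst (Cpartial a (Csc t u) N) = rsum (fun k => bRe a u k * t ^ k) N.
Proof.
  induction N; simpl. auto. rewrite IHN. f_equal. rewrite Cpow_Csc. unfold bRe.
  destruct (Cpow u N), (a N); unfold Cmul, Csc; simpl; ring.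
Qed.

Lemma snd_partial a u t N : snd (Cpartial a (Csc t u) N) = rsum (fun k => bIm a u k * t ^ k) N.
Proof.
  induction N; simpl. auto. rewrite IHN. f_equal. rewrite Cpow_Csc. unfold bIm.
  destruct (Cpow u N), (a N); unfold Cmul, Csc; simpl; ring.
Qed.

Lemma is_pseries_of_inf b t l : infinite_sum (fun k => b k * t ^ k) l -> is_pseries b t l.
Proof.
  intros H. apply is_series_Reals in H. unfold is_pseries.
  eapply is_series_ext; [|exact H]. intros n. cbv beta.
  unfold scal; simpl; unfold mult; simpl. rewrite Rmult_comm. f_equal; try (symmetry; apply pow_n_pow).
Qed.

Lemma inf_of_is_pseries b t l : is_pseries b t l -> infinite_sum (fun k => b k * t ^ k) l.
Proof.
  intros H. apply is_series_Reals. unfold is_pseries in H.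
  eapply is_series_ext; [|exact H]. intros n. cbv beta.
  unfold scal; simpl; unfold mult; simpl. rewrite Rmult_comm. f_equal; try apply pow_n_pow.
Qed.

Lemma bRe_bound a u n : Cnorm u = 1 -> Rabs (bRe a u n) <= Cnorm (a n).
Proof. intros Hu. unfold bRe. eapply Rle_trans. apply fst_le_Cnorm. rewrite Cnorm_mul, Cnorm_pow, Hu, pow1. lra. Qed.
Lemma bIm_bound a u n : Cnorm u = 1 -> Rabs (bIm a u n) <= Cnorm (a n).
Proof. intros Hu. unfold bIm. eapply Rle_trans. apply snd_le_Cnorm. rewrite Cnorm_mul, Cnorm_pow, Hu, pow1. lra. Qed.

Lemma PSeries_bRe f a u t :
  (forall z, Cnorm z < 1 -> Cseries_sum a z (f z)) -> Cnorm u = 1 ->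
  Rabs t < 1 -> PSeries (bRe a u) t = fst (f (Csc t u)).
Proof.
  intros Hs Hu Ht. apply is_series_unique.
  assert (Hc := Hs (Csc t u) ltac:(rewrite Cnorm_Csc_unit; auto)).
  apply CL_fst in Hc. apply is_series_Reals. apply Un_cv_rsum_inf.
  eapply Un_cv_ext; [|exact Hc]. intros n; cbv beta. apply fst_partial.
Qed.

Lemma PSeries_bIm f a u t :
  (forall z, Cnorm z < 1 -> Cseries_sum a z (f z)) -> Cnorm u = 1 ->
  Rabs t < 1 -> PSeries (bIm a u) t = snd (f (Csc t u)).
Proof.
  intros Hs Hu Ht. apply is_series_unique.
  assert (Hc := Hs (Csc t u) ltac:(rewrite Cnorm_Csc_unit; auto)).
  apply CL_snd in Hc. apply is_series_Reals. apply Un_cv_rsum_inf.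
  eapply Un_cv_ext; [|exact Hc]. intros n; cbv beta. apply snd_partial.
Qed.

Lemma ray_deriv_gen f u r d (proj : Cplx -> R) :
  (forall z w, proj (Cadd z w) = proj z + proj w) ->
  (forall z, proj (Copp z) = - proj z) ->
  (forall z, Rabs (proj z) <= Cnorm z) ->
  (forall h, proj (Cmul d (Csc h u)) = h * proj (Cmul u d)) ->
  Cnorm u = 1 -> Cderiv f (Csc r u) d ->
  derivable_pt_lim (fun t => proj (f (Csc t u))) r (proj (Cmul u d)).
Proof.
  intros Hadd Hopp Hle Hlin Hu Hd. intros eps He.
  destruct (Hd (eps/2) ltac:(lra)) as [delta [Hdel H]].
  exists (mkposreal delta Hdel). intros h Hh0 Hh. simpl in Hh.
  assert (Hn : 0 < Cnorm (Csc h u) < delta).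
  { rewrite Cnorm_Csc_unit by auto. split; auto. apply Rabs_pos_lt; auto. }
  specialize (H _ Hn). rewrite Cnorm_Csc_unit in H by auto.
  assert (E : Cadd (Csc r u) (Csc h u) = Csc (r + h) u) by (unfold Cadd, Csc; simpl; f_equal; ring).
  rewrite E in H.
  set (X := Csub (Csub (f (Csc (r + h) u)) (f (Csc r u))) (Cmul d (Csc h u))) in H.
  assert (EX : proj X = proj (f (Csc (r + h) u)) - proj (f (Csc r u)) - h * proj (Cmul u d)).
  { unfold X, Csub. rewrite !Hadd, !Hopp, Hlin. ring. }
  pose proof (Hle X) as HX. rewrite EX in HX.
  replace ((proj (f (Csc (r + h) u)) - proj (f (Csc r u))) / h - proj (Cmul u d))
    with ((proj (f (Csc (r + h) u)) - proj (f (Csc r u)) - h * proj (Cmul u d)) / h) by (field; auto).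
  unfold Rdiv. rewrite Rabs_mult, Rabs_inv.
  pose proof (Rabs_pos_lt h Hh0).
  apply Rle_lt_trans with (eps / 2 * Rabs h * / Rabs h).
  apply Rmult_le_compat_r. left; apply Rinv_0_lt_compat; auto. lra.
  rewrite Rmult_assoc, Rinv_r by lra. lra.
Qed.

Lemma ray_deriv_fst f u r d : Cnorm u = 1 -> Cderiv f (Csc r u) d ->
  is_derive (fun t => fst (f (Csc t u))) r (fst (Cmul u d)).
Proof.
  intros Hu Hd.
  assert (H1 : forall z w, fst (Cadd z w) = fst z + fst w) by (intros; reflexivity).
  assert (H2 : forall z, fst (Copp z) = - fst z) by (intros; reflexivity).
  assert (H4 : forall h, fst (Cmul d (Csc h u)) = h * fst (Cmul u d)) by (intros; unfold Cmul, Csc; simpl; ring).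
  pose proof (ray_deriv_gen f u r d fst H1 H2 fst_le_Cnorm H4 Hu Hd) as HH.
  apply is_derive_Reals in HH. exact HH.
Qed.

Lemma ray_deriv_snd f u r d : Cnorm u = 1 -> Cderiv f (Csc r u) d ->
  is_derive (fun t => snd (f (Csc t u))) r (snd (Cmul u d)).
Proof.
  intros Hu Hd.
  assert (H1 : forall z w, snd (Cadd z w) = snd z + snd w) by (intros; reflexivity).
  assert (H2 : forall z, snd (Copp z) = - snd z) by (intros; reflexivity).
  assert (H4 : forall h, snd (Cmul d (Csc h u)) = h * snd (Cmul u d)) by (intros; unfold Cmul, Csc; simpl; ring).
  pose proof (ray_deriv_gen f u r d snd H1 H2 snd_le_Cnorm H4 Hu Hd) as HH.
  apply is_derive_Reals in HH. exact HH.
Qed.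

Lemma deriv_PSeries_eq (b : nat -> R) (phi : R -> R) r l :
  Rabs r < 1 -> (forall t, Rabs t < 1 -> PSeries b t = phi t) ->
  Rbar_lt (Rabs r) (CV_radius b) ->
  is_derive phi r l -> is_pseries (PS_derive b) r l.
Proof.
  intros Hr Heq Hrad Hd.
  assert (H1 : is_derive phi r (PSeries (PS_derive b) r)).
  { eapply is_derive_ext_loc; [|apply is_derive_PSeries; auto].
    apply (locally_interval _ r (-1) 1).
    - simpl. apply Rabs_def2 in Hr. lra.
    - simpl. apply Rabs_def2 in Hr. lra.
    - intros y H1 H2. simpl in H1, H2. apply Heq. apply Rabs_def1; lra. }
  apply is_derive_unique in H1. apply is_derive_unique in Hd.
  rewrite <- Hd, H1.
  apply PSeries_correct. apply ex_pseries_derive; auto.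
Qed.

Lemma rsum_k_deriv (b : nat -> R) r N :
  rsum (fun k => INR k * b k * r ^ k) (S N) = r * rsum (fun k => PS_derive b k * r ^ k) N.
Proof.
  induction N.
  - simpl. ring.
  - change (rsum (fun k => INR k * b k * r ^ k) (S (S N))) with
      (rsum (fun k => INR k * b k * r ^ k) (S N) + INR (S N) * b (S N) * r ^ (S N)).
    rewrite IHN. change (rsum (fun k => PS_derive b k * r ^ k) (S N)) with (rsum (fun k => PS_derive b k * r ^ k) N + PS_derive b N * r ^ N). unfold PS_derive. change (r ^ S N) with (r * r ^ N). ring.
Qed.

Lemma real_g_series (b : nat -> R) (phi : R -> R) r l :
  Rabs r < 1 -> (forall t, Rabs t < 1 -> PSeries b t = phi t) ->
  Rbar_lt (Rabs r) (CV_radius b) -> is_derive phi r l ->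
  Un_cv (rsum (fun k => (INR k - 1) * b k * r ^ k)) (r * l - phi r).
Proof.
  intros Hr Heq Hrad Hd.
  pose proof (deriv_PSeries_eq b phi r l Hr Heq Hrad Hd) as H1.
  apply inf_of_is_pseries, inf_Un_cv_rsum in H1.
  assert (H2 : Un_cv (rsum (fun k => b k * r ^ k)) (phi r)).
  { rewrite <- (Heq r Hr). apply inf_Un_cv_rsum, inf_of_is_pseries, PSeries_correct.
    apply CV_radius_inside; auto. }
  apply Un_cv_shift.
  assert (H3 := CV_mult _ _ _ _ (Un_cv_const r) H1).
  assert (H4 : Un_cv (fun n => rsum (fun k => b k * r ^ k) (S n)) (phi r)).
  { intros eps He. destruct (H2 eps He) as [N HN]. exists N. intros n Hn. apply HN. lia. }
  assert (H5 := CV_minus _ _ _ _ H3 H4).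
  eapply Un_cv_ext; [|exact H5]. intros n. cbv beta.
  rewrite <- rsum_k_deriv.
  induction n; simpl; [ring|]. simpl in IHn. rewrite <- IHn. ring.
Qed.

Definition cg (a : nat -> Cplx) (n : nat) : Cplx := Csc (INR n - 1) (a n).

Lemma g_series f a u r d :
  (forall z, Cnorm z < 1 -> Cseries_sum a z (f z)) -> Cnorm u = 1 -> Rabs r < 1 ->
  Cderiv f (Csc r u) d ->
  Cseries_sum (cg a) (Csc r u) (Csub (Cmul (Csc r u) d) (f (Csc r u))).
Proof.
  intros Hs Hu Hr Hd. apply CL_comp.
  - pose proof (real_g_series (bRe a u) (fun t => fst (f (Csc t u))) r (fst (Cmul u d)) Hr
      (fun t Ht => PSeries_bRe f a u t Hs Hu Ht)
      (radius_ge f a Hs (bRe a u) (fun n => bRe_bound a u n Hu) r Hr)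
      (ray_deriv_fst f u r d Hu Hd)) as H.
    replace (fst (Csub (Cmul (Csc r u) d) (f (Csc r u)))) with (r * fst (Cmul u d) - fst (f (Csc r u)))
      by (unfold Csub, Cadd, Copp, Cmul, Csc; simpl; ring).
    eapply Un_cv_ext; [|exact H]. intros n. cbv beta. rewrite fst_partial.
    apply rsum_ext. intros k _. unfold bRe, cg, Cmul, Csc; simpl. ring.
  - pose proof (real_g_series (bIm a u) (fun t => snd (f (Csc t u))) r (snd (Cmul u d)) Hr
      (fun t Ht => PSeries_bIm f a u t Hs Hu Ht)
      (radius_ge f a Hs (bIm a u) (fun n => bIm_bound a u n Hu) r Hr)
      (ray_deriv_snd f u r d Hu Hd)) as H.
    replace (snd (Csub (Cmul (Csc r u) d) (f (Csc r u)))) with (r * snd (Cmul u d) - snd (f (Csc r u)))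
      by (unfold Csub, Cadd, Copp, Cmul, Csc; simpl; ring).
    eapply Un_cv_ext; [|exact H]. intros n. cbv beta. rewrite snd_partial.
    apply rsum_ext. intros k _. unfold bIm, cg, Cmul, Csc; simpl. ring.
Qed.

Definition cis (x : R) : Cplx := (cos x, sin x).

Lemma Cnorm_cis x : Cnorm (cis x) = 1.
Proof.
  unfold Cnorm, cis; simpl. pose proof (sin2_cos2 x). unfold Rsqr in H.
  replace (cos x * cos x + sin x * sin x) with 1 by lra. apply sqrt_1.
Qed.

Lemma cis_mul x y : Cmul (cis x) (cis y) = cis (x + y).
Proof. unfold cis, Cmul; simpl. rewrite cos_plus, sin_plus. f_equal; ring. Qed.

Lemma Cpow_cis x m : Cpow (cis x) m = cis (INR m * x).
Proof.
  induction m; simpl Cpow.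
  - unfold cis, C1. simpl. rewrite Rmult_0_l, cos_0, sin_0. reflexivity.
  - rewrite IHm, cis_mul, S_INR. f_equal. ring.
Qed.

Lemma conj_cis x : Cconj' (cis x) = cis (- x).
Proof. unfold Cconj', cis; simpl. rewrite cos_neg, sin_neg. reflexivity. Qed.

Lemma sum_cos_sin M y :
  2 * sin (y/2) * rsum (fun k => cos (INR k * y)) M = sin ((INR M - /2) * y) + sin (y/2) /\
  2 * sin (y/2) * rsum (fun k => sin (INR k * y)) M = cos (y/2) - cos ((INR M - /2) * y).
Proof.
  induction M as [|M [IH1 IH2]]; simpl rsum.
  - simpl. replace ((0 - /2) * y) with (- (y/2)) by field. rewrite sin_neg, cos_neg. split; ring.
  - rewrite S_INR. split.
    + rewrite Rmult_plus_distr_l, IH1.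
      replace ((INR M + 1 - /2) * y) with (INR M * y + y/2) by field.
      replace ((INR M - /2) * y) with (INR M * y - y/2) by field.
      rewrite sin_plus, sin_minus. ring.
    + rewrite Rmult_plus_distr_l, IH2.
      replace ((INR M + 1 - /2) * y) with (INR M * y + y/2) by field.
      replace ((INR M - /2) * y) with (INR M * y - y/2) by field.
      rewrite cos_plus, cos_minus. ring.
Qed.

Lemma sin_2PI_nat m : sin (2 * PI * INR m) = 0.
Proof. replace (2 * PI * INR m) with (0 + 2 * INR m * PI) by ring. rewrite sin_period. apply sin_0. Qed.
Lemma cos_2PI_nat m : cos (2 * PI * INR m) = 1.
Proof. replace (2 * PI * INR m) with (0 + 2 * INR m * PI) by ring. rewrite cos_period. apply cos_0. Qed.

Lemma sin_half_nz M m n : (m < M)%nat -> (n < M)%nat -> m <> n ->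
  sin (PI * (INR m - INR n) / INR M) <> 0.
Proof.
  intros Hm Hn Hmn H. apply sin_eq_0_0 in H. destruct H as [k Hk].
  assert (HM : 0 < INR M) by (apply lt_0_INR; lia).
  assert (E : INR m - INR n = IZR k * INR M).
  { assert (PI * (INR m - INR n) = PI * (IZR k * INR M)).
    { rewrite <- (Rmult_1_r (PI * (INR m - INR n))). rewrite <- (Rinv_r (INR M)) by lra.
      replace (PI * (INR m - INR n) * (INR M * / INR M)) with (PI * (INR m - INR n) / INR M * INR M) by (field; lra).
      rewrite Hk. ring. }
    apply Rmult_eq_reg_l in H; auto. pose proof PI_RGT_0; lra. }
  apply lt_INR in Hm. apply lt_INR in Hn. pose proof (pos_INR m). pose proof (pos_INR n).
  destruct (Z.lt_trichotomy k 0) as [Hk0|[Hk0|Hk0]].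
  - assert (IZR k <= -1) by (apply IZR_le; lia). nra.
  - subst k. simpl in E. apply Hmn. apply INR_eq. lra.
  - assert (1 <= IZR k) by (apply IZR_le; lia). nra.
Qed.

Lemma csum_ext (F G : nat -> Cplx) M : (forall k, F k = G k) -> csum F M = csum G M.
Proof. intros HFG. induction M; simpl; auto. rewrite IHM, HFG. auto. Qed.

Definition uk (M k : nat) : Cplx := cis (2 * PI * INR k / INR M).

Lemma csum_cis_zero M m n : (m < M)%nat -> (n < M)%nat -> m <> n ->
  csum (fun k => cis (INR k * (2 * PI * (INR m - INR n) / INR M))) M = C0.
Proof.
  intros Hm Hn Hmn.
  set (y := 2 * PI * (INR m - INR n) / INR M).
  assert (HM : 0 < INR M) by (apply lt_0_INR; lia).
  assert (Hs : sin (y/2) <> 0).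
  { unfold y. replace (2 * PI * (INR m - INR n) / INR M / 2) with (PI * (INR m - INR n) / INR M) by (field; lra).
    apply sin_half_nz; auto. }
  assert (HMy : (INR M - /2) * y = 2 * PI * INR m - 2 * PI * INR n - y/2).
  { unfold y. field. lra. }
  destruct (sum_cos_sin M y) as [H1 H2]. rewrite HMy in H1, H2.
  repeat rewrite ?sin_minus, ?cos_minus in H1. repeat rewrite ?sin_minus, ?cos_minus in H2.
  rewrite !sin_2PI_nat, !cos_2PI_nat in H1, H2.
  apply injective_projections.
  - rewrite fst_csum. unfold cis; simpl.
    apply Rmult_eq_reg_l with (2 * sin (y/2)). rewrite H1. simpl. ring. lra.
  - rewrite snd_csum. unfold cis; simpl.
    apply Rmult_eq_reg_l with (2 * sin (y/2)). rewrite H2. simpl. ring. lra.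
Qed.

Lemma uk_pow_conj M k m n :
  Cmul (Cpow (uk M k) m) (Cconj' (Cpow (uk M k) n)) = cis (INR k * (2 * PI * (INR m - INR n) / INR M)).
Proof.
  unfold uk. rewrite !Cpow_cis, conj_cis, cis_mul. f_equal.
  destruct (Req_dec (INR M) 0) as [E|E].
  - rewrite E. unfold Rdiv. rewrite Rinv_0. ring.
  - field. auto.
Qed.

Lemma orth M m n : (m < M)%nat -> (n < M)%nat -> m <> n ->
  csum (fun k => Cmul (Cpow (uk M k) m) (Cconj' (Cpow (uk M k) n))) M = C0.
Proof.
  intros. rewrite <- (csum_cis_zero M m n) by auto.
  apply csum_ext. intros k. apply uk_pow_conj.
Qed.

Lemma Cnorm_uk M k : Cnorm (uk M k) = 1.
Proof. apply Cnorm_cis. Qed.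

Lemma csum_add F G M : csum (fun k => Cadd (F k) (G k)) M = Cadd (csum F M) (csum G M).
Proof.
  induction M; simpl. unfold Cadd, C0; simpl; f_equal; ring.
  rewrite IHM. destruct (csum F M), (csum G M), (F M), (G M). unfold Cadd; simpl; f_equal; ring.
Qed.

Lemma csum_cmul c F M : csum (fun k => Cmul c (F k)) M = Cmul c (csum F M).
Proof.
  induction M; simpl. unfold Cmul, C0; simpl; f_equal; ring.
  rewrite IHM. destruct c, (csum F M), (F M). unfold Cadd, Cmul; simpl; f_equal; ring.
Qed.

Lemma csum_zero M : csum (fun _ => C0) M = C0.
Proof. induction M; simpl; auto. rewrite IHM. unfold Cadd, C0; simpl; f_equal; ring. Qed.

Lemma csum_swap (F : nat -> nat -> Cplx) M N :
  csum (fun k => csum (fun m => F k m) N) M = csum (fun m => csum (fun k => F k m) M) N.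
Proof.
  induction N; simpl.
  - apply csum_zero.
  - rewrite csum_add. rewrite IHN. auto.
Qed.

Lemma Cpartial_csum a z N : Cpartial a z N = csum (fun m => Cmul (a m) (Cpow z m)) N.
Proof. induction N; simpl; auto. rewrite IHN; auto. Qed.

Lemma csum_ind (X : Cplx) n N : (n < N)%nat ->
  csum (fun m => if Nat.eqb m n then X else C0) N = X.
Proof.
  induction N; intros H; [lia|]. simpl.
  destruct (Nat.eq_dec n N) as [->|Hne].
  - rewrite Nat.eqb_refl.
    assert (csum (fun m => if Nat.eqb m N then X else C0) N = C0).
    { clear IHN H. assert (forall K, (K <= N)%nat -> csum (fun m => if Nat.eqb m N then X else C0) K = C0).
      { induction K; simpl; intros HK; auto. rewrite IHK by lia.
        destruct (Nat.eqb_spec K N); [lia|]. unfold Cadd, C0; simpl; f_equal; ring. }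
      apply H; lia. }
    rewrite H0. destruct X; unfold Cadd, C0; simpl; f_equal; ring.
  - rewrite IHN by lia. destruct (Nat.eqb_spec N n); [lia|]. destruct X; unfold Cadd, C0; simpl; f_equal; ring.
Qed.

Lemma Csc_Cmul t z : Csc t z = Cmul (t, 0) z.
Proof. unfold Csc, Cmul; simpl; f_equal; ring. Qed.

Lemma rsum_ind_zero (G : nat -> R) M N : (N <= M)%nat ->
  rsum (fun m => if Nat.leb M m then G m else 0) N = 0.
Proof.
  induction N; simpl; intros H; auto. rewrite IHN by lia.
  destruct (Nat.leb_spec M N); [lia|]. ring.
Qed.

Lemma rsum_ind (G : nat -> R) M N : (M <= N)%nat ->
  rsum (fun m => if Nat.leb M m then G m else 0) N = rsum G N - rsum G M.
Proof.
  induction N; intros H.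
  - assert (M = O) by lia. subst. simpl. ring.
  - destruct (Nat.eq_dec M (S N)) as [->|Hne].
    + rewrite rsum_ind_zero by lia. ring.
    + simpl. rewrite IHN by lia. destruct (Nat.leb_spec M N); [|lia]. ring.
Qed.

Lemma tail_small (G : nat -> R) L : Un_cv (rsum G) L ->
  forall eps, 0 < eps -> exists M0, forall M N, (M0 <= M)%nat ->
    rsum (fun m => if Nat.leb M m then G m else 0) N <= eps.
Proof.
  intros H eps He. destruct (H (eps/2) ltac:(lra)) as [M0 HM0]. exists M0. intros M N HM.
  destruct (Nat.le_gt_cases N M) as [HN|HN].
  - rewrite rsum_ind_zero by auto. lra.
  - rewrite rsum_ind by lia. pose proof (HM0 N ltac:(lia)). pose proof (HM0 M ltac:(lia)).
    unfold R_dist in *. apply Rabs_def2 in H0. apply Rabs_def2 in H1. lra.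
Qed.

Lemma CL_cmul_r c s l : CL s l -> CL (fun n => Cmul (s n) c) (Cmul l c).
Proof.
  intros H. assert (E : forall z, Cmul z c = Cmul c z) by (intros z; destruct z, c; unfold Cmul; simpl; f_equal; ring).
  rewrite E. apply (CL_ext (fun n => Cmul c (s n)) _ _ O).
  - intros n _. symmetry. apply E.
  - apply CL_cmul; exact H.
Qed.

Lemma csum_cmul_r c F M : csum (fun k => Cmul (F k) c) M = Cmul (csum F M) c.
Proof.
  assert (E : forall z, Cmul z c = Cmul c z) by (intros z; destruct z, c; unfold Cmul; simpl; f_equal; ring).
  rewrite E. rewrite <- csum_cmul. apply csum_ext. intros; apply E.
Qed.

Lemma csum_sub F G M : Csub (csum F M) (csum G M) = csum (fun k => Csub (F k) (G k)) M.
Proof.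
  induction M; simpl. unfold Csub, Cadd, Copp, C0; simpl; f_equal; ring.
  rewrite <- IHM. destruct (csum F M), (csum G M), (F M), (G M). unfold Csub, Cadd, Copp; simpl; f_equal; ring.
Qed.

Definition ghat (gfun : nat -> Cplx) (M n : nat) : Cplx :=
  Csc (/ INR M) (csum (fun k => Cmul (gfun k) (Cconj' (Cpow (uk M k) n))) M).

Definition delta (M m n : nat) : Cplx :=
  Csc (/ INR M) (csum (fun k => Cmul (Cpow (uk M k) m) (Cconj' (Cpow (uk M k) n))) M).

Lemma delta_same M n : (0 < M)%nat -> delta M n n = C1.
Proof.
  intros HM. unfold delta.
  rewrite (csum_ext _ (fun _ => C1)).
  - assert (E : csum (fun _ => C1) M = (INR M, 0)).
    { clear HM. induction M; simpl csum. reflexivity.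
      rewrite IHM, S_INR. unfold Cadd, C1; simpl. f_equal; ring. }
    rewrite E. unfold Csc, C1; simpl. f_equal. field. apply not_0_INR; lia. ring.
  - intros k. rewrite uk_pow_conj. replace (INR k * (2 * PI * (INR n - INR n) / INR M)) with 0.
    unfold cis, C1. rewrite cos_0, sin_0. auto.
    destruct (Req_dec (INR M) 0) as [E|E]. rewrite E; unfold Rdiv; rewrite Rinv_0; ring. field; auto.
Qed.

Lemma delta_diff M m n : (m < M)%nat -> (n < M)%nat -> m <> n -> delta M m n = C0.
Proof.
  intros. unfold delta. rewrite orth by auto. unfold Csc, C0; simpl; f_equal; ring.
Qed.

Lemma delta_bound M m n : (0 < M)%nat -> Cnorm (delta M m n) <= 1.
Proof.
  intros HM. unfold delta. rewrite Cnorm_Csc.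
  assert (HM' : 0 < INR M) by (apply lt_0_INR; lia).
  rewrite Rabs_pos_eq by (left; apply Rinv_0_lt_compat; auto).
  eapply Rle_trans. apply Rmult_le_compat_l. left; apply Rinv_0_lt_compat; auto. apply Cnorm_csum.
  rewrite (rsum_ext _ (fun _ => 1)).
  - assert (E : rsum (fun _ => 1) M = INR M).
    { clear. induction M; simpl; auto. rewrite IHM. destruct M; simpl; ring. }
    rewrite E. right. field. lra.
  - intros k _. rewrite uk_pow_conj. apply Cnorm_cis.
Qed.

Lemma Cnorm_C0 : Cnorm C0 = 0.
Proof. unfold Cnorm, C0; simpl. replace (0*0+0*0) with 0 by ring. apply sqrt_0. Qed.

Lemma approx (c : nat -> Cplx) (gfun : nat -> Cplx) r M n B :
  0 <= r -> (n < M)%nat ->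
  (forall k, CL (Cpartial c (Csc r (uk M k))) (gfun k)) ->
  (forall N, rsum (fun m => if Nat.leb M m then Cnorm (c m) * r ^ m else 0) N <= B) ->
  Cnorm (Csub (ghat gfun M n) (Csc (r ^ n) (c n))) <= B.
Proof.
  intros Hr Hn Hg HB.
  set (Sq := fun N => Csc (/ INR M) (csum (fun k => Cmul (Cpartial c (Csc r (uk M k)) N) (Cconj' (Cpow (uk M k) n))) M)).
  assert (HS : CL Sq (ghat gfun M n)).
  { unfold Sq, ghat. rewrite Csc_Cmul.
    apply (CL_ext (fun N => Cmul (/ INR M, 0) (csum (fun k => Cmul (Cpartial c (Csc r (uk M k)) N) (Cconj' (Cpow (uk M k) n))) M)) _ _ O).
    intros; rewrite Csc_Cmul; auto.
    apply CL_cmul. apply (CL_csum (fun k N => Cmul (Cpartial c (Csc r (uk M k)) N) (Cconj' (Cpow (uk M k) n)))).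
    intros k. apply CL_cmul_r. apply Hg. }
  assert (ES : forall N, Sq N = csum (fun m => Cmul (Csc (r ^ m) (c m)) (delta M m n)) N).
  { intros N. unfold Sq, delta.
    rewrite (csum_ext _ (fun k => csum (fun m => Cmul (Cmul (c m) (Csc (r ^ m) (Cpow (uk M k) m))) (Cconj' (Cpow (uk M k) n))) N)).
    2:{ intros k. rewrite Cpartial_csum, <- csum_cmul_r. apply csum_ext. intros m. rewrite Cpow_Csc. auto. }
    rewrite csum_swap. rewrite Csc_Cmul. rewrite <- (csum_cmul (/ INR M, 0)). apply csum_ext. intros m.
    rewrite <- (csum_cmul (/ INR M, 0)). rewrite (Csc_Cmul (/ INR M)).
    rewrite <- (csum_cmul (/ INR M, 0)). rewrite <- (csum_cmul (Csc (r ^ m) (c m))). apply csum_ext. intros k.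
    destruct (c m), (Cpow (uk M k) m), (Cpow (uk M k) n). unfold Cmul, Csc, Cconj'; simpl; f_equal; ring. }
  apply (CL_le (fun N => Csub (Sq N) (Csc (r ^ n) (c n))) _ _ (S n)).
  - unfold Csub. apply CL_add; auto. apply CL_const.
  - intros N HN. rewrite ES.
    rewrite <- (csum_ind (Csc (r ^ n) (c n)) n N) by lia.
    rewrite (csum_ext (fun m => if Nat.eqb m n then Csc (r ^ n) (c n) else C0)
               (fun m => Cmul (Csc (r ^ m) (c m)) (if Nat.eqb m n then C1 else C0))).
    2:{ intros m. destruct (Nat.eqb_spec m n). subst. destruct (c n); unfold Cmul, Csc, C1; simpl; f_equal; ring.
        destruct (c m); unfold Cmul, Csc, C0; simpl; f_equal; ring. }
    rewrite csum_sub. eapply Rle_trans; [apply Cnorm_csum|]. eapply Rle_trans; [|apply (HB N)].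
    apply rsum_le. intros m _.
    replace (Csub (Cmul (Csc (r ^ m) (c m)) (delta M m n)) (Cmul (Csc (r ^ m) (c m)) (if Nat.eqb m n then C1 else C0)))
      with (Cmul (Csc (r ^ m) (c m)) (Csub (delta M m n) (if Nat.eqb m n then C1 else C0))).
    2:{ destruct (c m), (delta M m n), (if Nat.eqb m n then C1 else C0). unfold Cmul, Csc, Csub, Cadd, Copp; simpl; f_equal; ring. }
    rewrite Cnorm_mul, Cnorm_Csc, Rabs_pos_eq by (apply pow_le; auto).
    assert (Hc : 0 <= Cnorm (c m) * r ^ m) by (apply Rmult_le_pos; [apply Cnorm_ge0|apply pow_le; auto]).
    destruct (Nat.leb_spec M m).
    + destruct (Nat.eqb_spec m n); [lia|].
      replace (Csub (delta M m n) C0) with (delta M m n).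
      2:{ destruct (delta M m n); unfold Csub, Cadd, Copp, C0; simpl; f_equal; ring. }
      pose proof (delta_bound M m n ltac:(lia)). rewrite (Rmult_comm (r ^ m)). nra.
    + destruct (Nat.eqb_spec m n).
      * subst. rewrite delta_same by lia.
        replace (Csub C1 C1) with C0 by (unfold Csub, Cadd, Copp, C1, C0; simpl; f_equal; ring).
        rewrite Cnorm_C0. lra.
      * rewrite delta_diff by (auto; lia).
        replace (Csub C0 C0) with C0 by (unfold Csub, Cadd, Copp, C0; simpl; f_equal; ring).
        rewrite Cnorm_C0. lra.
Qed.

Definition ip (z w : Cplx) : R := fst z * fst w + snd z * snd w.

Lemma ip_add A B W : ip (Cadd A B) W = ip A W + ip B W.
Proof. unfold ip, Cadd; simpl; ring. Qed.

Lemma nsq_uk_pow M k n : nsq (Cpow (uk M k) n) = 1.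
Proof. rewrite <- Cnorm_sq, Cnorm_pow, Cnorm_uk, pow1. ring. Qed.

Lemma bessel_id (y p2 p3 : nat -> Cplx) W2 W3 M :
  (forall k, nsq (p2 k) = 1) -> (forall k, nsq (p3 k) = 1) ->
  rsum (fun k => nsq (Csub (Csub (y k) (Cmul W2 (p2 k))) (Cmul W3 (p3 k)))) M =
  rsum (fun k => nsq (y k)) M - 2 * ip (csum (fun k => Cmul (y k) (Cconj' (p2 k))) M) W2
  - 2 * ip (csum (fun k => Cmul (y k) (Cconj' (p3 k))) M) W3 + INR M * (nsq W2 + nsq W3)
  + 2 * ip (csum (fun k => Cmul (p2 k) (Cconj' (p3 k))) M) (Cmul (Cconj' W2) W3).
Proof.
  intros H2 H3. induction M.
  - simpl. unfold ip, C0; simpl. ring.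
  - simpl rsum. simpl csum. rewrite IHM, !ip_add, S_INR.
    assert (E : nsq (Csub (Csub (y M) (Cmul W2 (p2 M))) (Cmul W3 (p3 M))) =
      nsq (y M) - 2 * ip (Cmul (y M) (Cconj' (p2 M))) W2 - 2 * ip (Cmul (y M) (Cconj' (p3 M))) W3
      + nsq W2 * nsq (p2 M) + nsq W3 * nsq (p3 M) + 2 * ip (Cmul (p2 M) (Cconj' (p3 M))) (Cmul (Cconj' W2) W3)).
    { destruct (y M), (p2 M), (p3 M), W2, W3. unfold nsq, ip, Csub, Cadd, Copp, Cmul, Cconj'; simpl. ring. }
    rewrite E, H2, H3. ring.
Qed.

Lemma bessel (y : nat -> Cplx) M : (4 <= M)%nat ->
  INR M * (nsq (ghat y M 2) + nsq (ghat y M 3)) <= rsum (fun k => nsq (y k)) M.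
Proof.
  intros HM.
  assert (HM' : INR M <> 0) by (apply not_0_INR; lia).
  pose proof (bessel_id y (fun k => Cpow (uk M k) 2) (fun k => Cpow (uk M k) 3) (ghat y M 2) (ghat y M 3) M
    (fun k => nsq_uk_pow M k 2) (fun k => nsq_uk_pow M k 3)) as E.
  assert (E1 : forall n, csum (fun k => Cmul (y k) (Cconj' (Cpow (uk M k) n))) M = Csc (INR M) (ghat y M n)).
  { intros n. unfold ghat. destruct (csum _ M). unfold Csc; apply injective_projections; simpl; field; auto. }
  cbv beta in E. rewrite !E1 in E. rewrite (orth M 2 3) in E by lia.
  assert (0 <= rsum (fun k => nsq (Csub (Csub (y k) (Cmul (ghat y M 2) (Cpow (uk M k) 2))) (Cmul (ghat y M 3) (Cpow (uk M k) 3)))) M).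
  { apply rsum_ge0. intros; apply nsq_ge0. }
  rewrite E in H.
  assert (ip (Csc (INR M) (ghat y M 2)) (ghat y M 2) = INR M * nsq (ghat y M 2)) by (unfold ip, nsq, Csc; simpl; ring).
  assert (ip (Csc (INR M) (ghat y M 3)) (ghat y M 3) = INR M * nsq (ghat y M 3)) by (unfold ip, nsq, Csc; simpl; ring).
  assert (ip C0 (Cmul (Cconj' (ghat y M 2)) (ghat y M 3)) = 0) by (unfold ip, C0; simpl; ring).
  lra.
Qed.

Lemma mean_id (P : nat -> Cplx) W r K M :
  rsum (fun k => 1 + 2 * r * ip (P k) W + K) M = INR M * (1 + K) + 2 * r * ip (csum P M) W.
Proof.
  induction M. simpl. unfold ip, C0; simpl; ring.
  simpl rsum; simpl csum. rewrite IHM, ip_add, S_INR. ring.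
Qed.

Lemma mean_sq q r M : (2 <= M)%nat ->
  rsum (fun k => nsq (Cadd C1 (Cmul q (Csc r (uk M k))))) M = INR M * (1 + r * r * nsq q).
Proof.
  intros HM.
  rewrite (rsum_ext _ (fun k => 1 + 2 * r * ip (Cmul (Cpow (uk M k) 1) (Cconj' (Cpow (uk M k) 0))) (Cconj' q) + r * r * nsq q)).
  - rewrite mean_id, orth by lia. unfold ip, C0; simpl. ring.
  - intros k _. pose proof (nsq_uk_pow M k 1) as H1. simpl Cpow in *.
    destruct (uk M k) as [u1 u2], q as [q1 q2]. unfold nsq, ip, Cadd, Cmul, Csc, Cconj', C1 in *; simpl in *.
    replace (u1 * 1 - u2 * 0) with u1 in H1 by ring. replace (u1 * 0 + u2 * 1) with u2 in H1 by ring.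
    nra.
Qed.

Lemma gamma_cv f a r :
  (forall z, Cnorm z < 1 -> Cseries_sum a z (f z)) -> 0 <= r < 1 ->
  exists L, Un_cv (rsum (fun m => (INR m + 1) * Cnorm (a m) * r ^ m)) L.
Proof.
  intros Hs Hr.
  set (al := fun m => Cnorm (a m)).
  set (ga := PS_plus al (PS_incr_1 (PS_derive al))).
  assert (Hal : Rbar_lt (Rabs r) (CV_radius al)).
  { apply (radius_ge f a Hs al). intros n. unfold al. rewrite Rabs_pos_eq by apply Cnorm_ge0. lra.
    rewrite Rabs_pos_eq; lra. }
  assert (Hga : Rbar_lt (Rabs r) (CV_radius ga)).
  { eapply Rbar_lt_le_trans; [|apply CV_radius_plus].
    rewrite CV_radius_incr_1, CV_radius_derive. apply Rbar_min_case; auto. }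
  destruct (CV_disk_inside ga r Hga) as [L HL].
  exists L. apply inf_Un_cv_rsum. apply is_series_Reals in HL.
  intros eps He. destruct (HL eps He) as [N HN]. exists N. intros n Hn.
  replace (sum_f_R0 (fun m => (INR m + 1) * Cnorm (a m) * r ^ m) n) with
    (sum_f_R0 (fun n0 => Rabs (ga n0 * r ^ n0)) n). apply HN; auto.
  apply sum_eq. intros i _.
  assert (Eg : ga i = (INR i + 1) * Cnorm (a i)).
  { unfold ga, al, PS_plus, PS_incr_1, PS_derive. destruct i.
    - change (plus (Cnorm (a 0%nat)) zero) with (Cnorm (a 0%nat) + 0). match goal with |- ?A = ?B => change (@eq R A B) end. simpl. ring.
    - change (plus (Cnorm (a (S i))) (INR (S i) * Cnorm (a (S i)))) with (Cnorm (a (S i)) + INR (S i) * Cnorm (a (S i))).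
      match goal with |- ?A = ?B => change (@eq R A B) end. ring. }
  rewrite Eg. rewrite Rabs_pos_eq. ring.
  apply Rmult_le_pos; [|apply pow_le; lra]. pose proof (Cnorm_ge0 (a i)); pose proof (pos_INR i). nra.
Qed.

Lemma uk_shift M k n : Cmul (uk M k) (Cconj' (Cpow (uk M k) (S n))) = Cconj' (Cpow (uk M k) n).
Proof. unfold uk. rewrite !Cpow_cis, !conj_cis, cis_mul, S_INR. f_equal. ring. Qed.

Lemma ghat_y g q r M n :
  ghat (fun k => Csc 2 (Cmul (g k) (Cadd C1 (Cmul q (Csc r (uk M k)))))) M (S n) =
  Cadd (Csc 2 (ghat g M (S n))) (Cmul (Csc (2 * r) q) (ghat g M n)).
Proof.
  unfold ghat.
  rewrite (csum_ext _ (fun k => Cadd (Cmul (2, 0) (Cmul (g k) (Cconj' (Cpow (uk M k) (S n)))))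
                                     (Cmul (Csc (2 * r) q) (Cmul (g k) (Cconj' (Cpow (uk M k) n)))))).
  - rewrite csum_add, !csum_cmul.
    destruct (csum (fun k => Cmul (g k) (Cconj' (Cpow (uk M k) (S n)))) M),
             (csum (fun k => Cmul (g k) (Cconj' (Cpow (uk M k) n))) M), q.
    unfold Csc, Cmul, Cadd; simpl; f_equal; ring.
  - intros k. rewrite <- (uk_shift M k n).
    generalize (Cpow (uk M k) (S n)) (uk M k) (g k). intros p u w.
    destruct p, u, w, q. unfold Csc, Cmul, Cadd, Cconj', C1; simpl; f_equal; ring.
Qed.

Lemma close_sq Y Z eta : Cnorm (Csub Y Z) <= eta -> nsq Z - 2 * eta * Cnorm Z <= nsq Y.
Proof.
  intros H.
  assert (HZ : Cnorm Z <= Cnorm Y + eta).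
  { assert (E : Cadd Y (Copp (Csub Y Z)) = Z) by (destruct Y, Z; unfold Cadd, Copp, Csub; simpl; f_equal; ring).
    pose proof (Cnorm_add Y (Copp (Csub Y Z))) as H0. rewrite Cnorm_opp, E in H0. lra. }
  rewrite <- !Cnorm_sq. pose proof (Cnorm_ge0 Z) as H1. pose proof (Cnorm_ge0 Y) as H2.
  pose proof (Cnorm_ge0 (Csub Y Z)) as H3.
  set (z := Cnorm Z) in *. set (y := Cnorm Y) in *.
  destruct (Rle_lt_dec eta z) as [Hc|Hc].
  - assert (0 <= z - eta <= y) by lra. nra.
  - nra.
Qed.

Lemma eps_limit A C D : 0 <= C -> (forall eps, 0 < eps -> A - eps * C <= D) -> A <= D.
Proof.
  intros HC H. apply Rnot_lt_le. intros Hlt.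
  specialize (H ((D - A) / (-(C + 1))) ). 
  assert (0 < (D - A) / (-(C + 1))).
  { replace ((D - A) / (-(C + 1))) with ((A - D) / (C + 1)) by (field; lra).
    apply Rdiv_lt_0_compat; lra. }
  specialize (H H0).
  replace ((D - A) / (-(C + 1))) with ((A - D) / (C + 1)) in H by (field; lra).
  assert ((A - D) / (C + 1) * C < A - D).
  { apply Rlt_le_trans with ((A - D) / (C + 1) * (C + 1)).
    apply Rmult_lt_compat_l. apply Rdiv_lt_0_compat; lra. lra. right; field; lra. }
  lra.
Qed.

Lemma main_r f a q r : in_Omega f a -> 0 < r < 1 ->
  nsq (Cadd (Csc 2 (Csc (r ^ 2) (cg a 2))) (Cmul (Csc (2 * r) q) (Csc (r ^ 1) (cg a 1)))) +
  nsq (Cadd (Csc 2 (Csc (r ^ 3) (cg a 3))) (Cmul (Csc (2 * r) q) (Csc (r ^ 2) (cg a 2))))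
  <= 1 + r * r * nsq q.
Proof.
  intros [Ha0 [Ha1 [Hs Hd]]] Hr.
  assert (HD : forall z, exists d, Cnorm z < 1 -> Cderiv f z d /\ Cnorm (Csub (Cmul z d) (f z)) < / 2).
  { intros z. destruct (classic (Cnorm z < 1)) as [H|H].
    - destruct (Hd z H) as [d Hd']. exists d; auto.
    - exists C0; intros; contradiction. }
  set (D := fun z => proj1_sig (constructive_indefinite_description _ (HD z))).
  assert (HDp : forall z, Cnorm z < 1 -> Cderiv f z (D z) /\ Cnorm (Csub (Cmul z (D z)) (f z)) < / 2).
  { intros z Hz. exact (proj2_sig (constructive_indefinite_description _ (HD z)) Hz). }
  set (gf := fun M k => Csub (Cmul (Csc r (uk M k)) (D (Csc r (uk M k)))) (f (Csc r (uk M k)))).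
  assert (Hzk : forall M k, Cnorm (Csc r (uk M k)) < 1).
  { intros. rewrite Cnorm_Csc_unit by apply Cnorm_uk. rewrite Rabs_pos_eq; lra. }
  assert (Hra : Rabs r < 1) by (rewrite Rabs_pos_eq; lra).
  assert (Hg : forall M k, CL (Cpartial (cg a) (Csc r (uk M k))) (gf M k)).
  { intros M k. exact (g_series f a (uk M k) r _ Hs (Cnorm_uk M k) Hra (proj1 (HDp _ (Hzk M k)))). }
  assert (Hgb : forall M k, Cnorm (gf M k) < / 2).
  { intros M k. exact (proj2 (HDp _ (Hzk M k))). }
  destruct (gamma_cv f a r Hs ltac:(lra)) as [L HL].
  set (Z2 := Cadd (Csc 2 (Csc (r ^ 2) (cg a 2))) (Cmul (Csc (2 * r) q) (Csc (r ^ 1) (cg a 1)))).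
  set (Z3 := Cadd (Csc 2 (Csc (r ^ 3) (cg a 3))) (Cmul (Csc (2 * r) q) (Csc (r ^ 2) (cg a 2)))).
  set (K := 2 + 2 * r * Cnorm q).
  assert (HK : 0 <= K) by (unfold K; pose proof (Cnorm_ge0 q); nra).
  apply (eps_limit _ (2 * K * (Cnorm Z2 + Cnorm Z3))).
  { pose proof (Cnorm_ge0 Z2); pose proof (Cnorm_ge0 Z3); nra. }
  intros eps Heps.
  destruct (tail_small _ L HL eps Heps) as [M0 HM0].
  set (M := Nat.max M0 4).
  assert (HM4 : (4 <= M)%nat) by (unfold M; lia).
  assert (Happ : forall n, (n < M)%nat -> Cnorm (Csub (ghat (gf M) M n) (Csc (r ^ n) (cg a n))) <= eps).
  { intros n Hn. apply (approx (cg a) (gf M) r M n eps ltac:(lra) Hn (Hg M)).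
    intros N. eapply Rle_trans; [|apply (HM0 M N ltac:(unfold M; lia))].
    apply rsum_le. intros m _. destruct (Nat.leb M m); [|lra].
    unfold cg. rewrite Cnorm_Csc.
    apply Rmult_le_compat_r. apply pow_le; lra.
    pose proof (Cnorm_ge0 (a m)). pose proof (pos_INR m).
    apply Rmult_le_compat_r; auto. apply Rabs_le. lra. }
  set (y := fun k => Csc 2 (Cmul (gf M k) (Cadd C1 (Cmul q (Csc r (uk M k)))))).
  assert (Hbes := bessel y M HM4).
  assert (Hmean : rsum (fun k => nsq (y k)) M <= INR M * (1 + r * r * nsq q)).
  { rewrite <- (mean_sq q r M) by lia. apply rsum_le. intros k _.
    rewrite <- !Cnorm_sq. unfold y. rewrite Cnorm_Csc, Cnorm_mul.
    pose proof (Hgb M k). pose proof (Cnorm_ge0 (gf M k)).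
    pose proof (Cnorm_ge0 (Cadd C1 (Cmul q (Csc r (uk M k))))).
    rewrite Rabs_pos_eq by lra.
    set (g0 := Cnorm (gf M k)) in *. set (w0 := Cnorm (Cadd C1 (Cmul q (Csc r (uk M k))))) in *.
    assert (0 <= 2 * (g0 * w0) <= w0) by nra. nra. }
  assert (HMpos : 0 < INR M) by (apply lt_0_INR; lia).
  assert (HY : nsq (ghat y M 2) + nsq (ghat y M 3) <= 1 + r * r * nsq q).
  { apply Rmult_le_reg_l with (INR M); auto. lra. }
  unfold y in HY. rewrite (ghat_y (gf M) q r M 1), (ghat_y (gf M) q r M 2) in HY.
  assert (Hc : forall n, (S n < M)%nat ->
     Cnorm (Csub (Cadd (Csc 2 (ghat (gf M) M (S n))) (Cmul (Csc (2 * r) q) (ghat (gf M) M n)))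
                 (Cadd (Csc 2 (Csc (r ^ S n) (cg a (S n)))) (Cmul (Csc (2 * r) q) (Csc (r ^ n) (cg a n)))))
     <= K * eps).
  { intros n Hn.
    assert (E : Csub (Cadd (Csc 2 (ghat (gf M) M (S n))) (Cmul (Csc (2 * r) q) (ghat (gf M) M n)))
                 (Cadd (Csc 2 (Csc (r ^ S n) (cg a (S n)))) (Cmul (Csc (2 * r) q) (Csc (r ^ n) (cg a n))))
             = Cadd (Csc 2 (Csub (ghat (gf M) M (S n)) (Csc (r ^ S n) (cg a (S n)))))
                    (Cmul (Csc (2 * r) q) (Csub (ghat (gf M) M n) (Csc (r ^ n) (cg a n))))).
    { destruct (ghat (gf M) M (S n)), (ghat (gf M) M n), (Csc (r ^ S n) (cg a (S n))), (Csc (r ^ n) (cg a n)), q.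
      unfold Csub, Cadd, Copp, Cmul, Csc; simpl; f_equal; ring. }
    rewrite E. eapply Rle_trans; [apply Cnorm_add|].
    rewrite Cnorm_Csc, Cnorm_mul, Cnorm_Csc.
    pose proof (Happ (S n) Hn). pose proof (Happ n ltac:(lia)).
    rewrite (Rabs_pos_eq 2) by lra. rewrite (Rabs_pos_eq (2 * r)) by lra.
    pose proof (Cnorm_ge0 q). unfold K.
    pose proof (Cnorm_ge0 (Csub (ghat (gf M) M n) (Csc (r ^ n) (cg a n)))).
    assert (0 <= 2 * r * Cnorm q) by nra. nra. }
  pose proof (close_sq _ _ _ (Hc 1%nat ltac:(lia))) as C2.
  pose proof (close_sq _ _ _ (Hc 2%nat ltac:(lia))) as C3.
  fold Z2 in C2. fold Z3 in C3. nra.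
Qed.

Lemma bernoulli_le n t : 0 <= t <= 1 -> 1 - INR n * t <= (1 - t) ^ n.
Proof.
  intros Ht. induction n.
  - simpl. lra.
  - rewrite S_INR. simpl. pose proof (pow_le (1 - t) n ltac:(lra)).
    assert (0 <= INR n * t) by (apply Rmult_le_pos; [apply pos_INR|lra]). nra.
Qed.

Lemma limit_r X Y Q : 0 <= X -> 0 <= Y -> 0 <= Q ->
  (forall r, 0 < r < 1 -> r ^ 4 * X + r ^ 6 * Y <= 1 + r * r * Q) -> X + Y <= 1 + Q.
Proof.
  intros HX HY HQ H. apply Rnot_lt_le. intros Hlt.
  set (d := X + Y - (1 + Q)).
  set (t := Rmin (/2) (d / (2 * (4 * X + 6 * Y) + 1))).
  assert (Ht0 : 0 < t).
  { unfold t. apply Rmin_glb_lt. lra. apply Rdiv_lt_0_compat. unfold d; lra. lra. }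
  assert (Ht1 : t <= /2) by apply Rmin_l.
  assert (Ht2 : t <= d / (2 * (4 * X + 6 * Y) + 1)) by apply Rmin_r.
  assert (Htd : t * (4 * X + 6 * Y) < d).
  { apply Rle_lt_trans with (d / (2 * (4 * X + 6 * Y) + 1) * (4 * X + 6 * Y)).
    apply Rmult_le_compat_r; lra.
    assert (0 < d) by (unfold d; lra).
    apply Rmult_lt_reg_r with (2 * (4 * X + 6 * Y) + 1). lra.
    replace (d / (2 * (4 * X + 6 * Y) + 1) * (4 * X + 6 * Y) * (2 * (4 * X + 6 * Y) + 1)) with (d * (4 * X + 6 * Y)) by (field; lra).
    apply Rmult_lt_compat_l; lra. }
  specialize (H (1 - t) ltac:(lra)).
  pose proof (bernoulli_le 4 t ltac:(lra)). pose proof (bernoulli_le 6 t ltac:(lra)).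
  simpl INR in H0, H1.
  assert ((1 - t) * (1 - t) * Q <= Q).
  { assert (Hq1 : (1 - t) * (1 - t) <= 1) by (clear H; nra).
    pose proof (Rmult_le_compat_r Q _ _ HQ Hq1). lra. }
  assert ((1 - 4 * t) * X <= (1 - t) ^ 4 * X).
  { replace (1 + 1 + 1 + 1) with 4 in H0 by ring. apply Rmult_le_compat_r; lra. }
  assert ((1 - 6 * t) * Y <= (1 - t) ^ 6 * Y).
  { replace (1 + 1 + 1 + 1 + 1 + 1) with 6 in H1 by ring. apply Rmult_le_compat_r; lra. }
  assert (Hd : d = X + Y - (1 + Q)) by reflexivity.
  clearbody t d. subst d. nra.
Qed.

Lemma schur_bound B2 B3 :
  (forall q, nsq B2 + nsq (Cadd B3 (Cmul q B2)) <= 1 + nsq q) ->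
  nsq B2 <= 1 /\ Cnorm B3 <= 1 - nsq B2.
Proof.
  intros H.
  assert (H0 := H C0).
  replace (Cadd B3 (Cmul C0 B2)) with B3 in H0 by (destruct B3, B2; unfold Cadd, Cmul, C0; simpl; f_equal; ring).
  replace (nsq C0) with 0 in H0 by (unfold nsq, C0; simpl; ring).
  pose proof (nsq_ge0 B2) as HB2. pose proof (nsq_ge0 B3) as HB3.
  split; [lra|].
  apply Cnorm_le_sq. lra.
  set (p := nsq B2) in *. set (b := nsq B3) in *.
  destruct (Req_dec p 1) as [Hp|Hp].
  - assert (b = 0) by lra. rewrite H1, Hp. lra.
  - set (s := / (1 - p)).
    assert (Hs : s * (1 - p) = 1) by (unfold s; field; lra).
    assert (Hs0 : 0 < s) by (unfold s; apply Rinv_0_lt_compat; lra).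
    specialize (H (Csc s (Cmul (Cconj' B2) B3))).
    assert (E1 : Cadd B3 (Cmul (Csc s (Cmul (Cconj' B2) B3)) B2) = Csc (1 + s * p) B3).
    { unfold p, nsq. destruct B2, B3. unfold Cadd, Cmul, Csc, Cconj'; simpl; f_equal; ring. }
    assert (E2 : nsq (Csc s (Cmul (Cconj' B2) B3)) = s * s * p * b).
    { unfold p, b, nsq. destruct B2, B3. unfold Cmul, Csc, Cconj'; simpl; ring. }
    assert (E3 : forall t z, nsq (Csc t z) = t * t * nsq z) by (intros t z; unfold nsq, Csc; simpl; ring).
    rewrite E1, E2, E3 in H. fold b in H.
    assert (E4 : 1 + s * p = s) by nra.
    rewrite E4 in H.
    (* p + s^2 b <= 1 + s^2 p b  ->  s^2 b (1-p) <= 1 - p *)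
    assert (H5 : s * s * b * (1 - p) <= 1 - p) by nra.
    assert (H6 : s * s * b <= 1).
    { apply Rmult_le_reg_r with (1 - p). lra. lra. }
    assert (H7 : b = (s * s * b) * ((1 - p) * (1 - p))).
    { replace ((s * s * b) * ((1 - p) * (1 - p))) with (b * (s * (1 - p)) * (s * (1 - p))) by ring.
      rewrite Hs. ring. }
    rewrite H7. assert (0 <= (1 - p) * (1 - p)) by nra. nra.
Qed.

Lemma upper f a mu : in_Omega f a ->
  Cnorm (Csub (a 3%nat) (Cmul mu (Cmul (a 2%nat) (a 2%nat)))) <= / 4 * Rmax 1 (Cnorm mu).
Proof.
  intros HO.
  set (B2 := Csc 2 (a 2%nat)). set (B3 := Csc 4 (a 3%nat)).
  assert (HP : forall q, nsq B2 + nsq (Cadd B3 (Cmul q B2)) <= 1 + nsq q).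
  { intros q. apply limit_r; try apply nsq_ge0.
    intros r Hr. pose proof (main_r f a q r HO Hr) as H.
    assert (E1 : Cadd (Csc 2 (Csc (r ^ 2) (cg a 2))) (Cmul (Csc (2 * r) q) (Csc (r ^ 1) (cg a 1))) = Csc (r ^ 2) B2).
    { unfold B2, cg. simpl INR. destruct (a 2%nat), (a 1%nat), q. unfold Cadd, Cmul, Csc; simpl; f_equal; ring. }
    assert (E2 : Cadd (Csc 2 (Csc (r ^ 3) (cg a 3))) (Cmul (Csc (2 * r) q) (Csc (r ^ 2) (cg a 2))) = Csc (r ^ 3) (Cadd B3 (Cmul q B2))).
    { unfold B2, B3, cg. simpl INR. destruct (a 2%nat), (a 3%nat), q. unfold Cadd, Cmul, Csc; simpl; f_equal; ring. }
    rewrite E1, E2 in H.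
    assert (E3 : forall t z, nsq (Csc t z) = t * t * nsq z) by (intros t z; unfold nsq, Csc; simpl; ring).
    rewrite !E3 in H. replace (r ^ 4) with (r ^ 2 * r ^ 2) by ring. replace (r ^ 6) with (r ^ 3 * r ^ 3) by ring.
    lra. }
  destruct (schur_bound B2 B3 HP) as [H1 H2].
  assert (E : Csub (a 3%nat) (Cmul mu (Cmul (a 2%nat) (a 2%nat))) = Csc (/4) (Csub B3 (Cmul mu (Cmul B2 B2)))).
  { unfold B2, B3. destruct (a 2%nat), (a 3%nat), mu. unfold Csub, Cadd, Copp, Cmul, Csc; simpl; f_equal; field. }
  rewrite E, Cnorm_Csc, Rabs_pos_eq by lra.
  apply Rmult_le_compat_l; [lra|].
  eapply Rle_trans; [apply Cnorm_sub|].
  rewrite !Cnorm_mul. rewrite Cnorm_sq.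
  pose proof (nsq_ge0 B2). pose proof (Cnorm_ge0 mu).
  pose proof (Rmax_l 1 (Cnorm mu)). pose proof (Rmax_r 1 (Cnorm mu)).
  assert (Cnorm mu * nsq B2 <= Rmax 1 (Cnorm mu) * nsq B2) by (apply Rmult_le_compat_r; lra).
  nra.
Qed.

Lemma poly_series (a : nat -> Cplx) z : (forall n, (4 <= n)%nat -> a n = C0) ->
  Cseries_sum a z (Cpartial a z 4).
Proof.
  intros Ha. unfold Cseries_sum. apply (CL_ext (fun _ => Cpartial a z 4) _ _ 4).
  - intros n Hn. induction Hn as [|m Hm IH]; auto.
    change (Cpartial a z (S m)) with (Cadd (Cpartial a z m) (Cmul (a m) (Cpow z m))). rewrite <- IH, (Ha m Hm).
    destruct (Cpartial a z 4), (Cpow z m). unfold Cadd, Cmul, C0; simpl; f_equal; ring.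
  - apply CL_const.
Qed.

Lemma nsq_mul z w : nsq (Cmul z w) = nsq z * nsq w.
Proof. destruct z, w; unfold nsq, Cmul; simpl; ring. Qed.

Lemma Cnorm_sqr z : Cnorm (Cmul z z) = Cnorm z * Cnorm z.
Proof. apply Cnorm_mul. Qed.

Definition fA (z : Cplx) : Cplx := Cadd z (Csc (/2) (Cmul z z)).
Definition aA (n : nat) : Cplx := match n with 1%nat => C1 | 2%nat => (/2, 0) | _ => C0 end.
Definition fB (z : Cplx) : Cplx := Cadd z (Csc (/4) (Cmul z (Cmul z z))).
Definition aB (n : nat) : Cplx := match n with 1%nat => C1 | 3%nat => (/4, 0) | _ => C0 end.

Lemma omegaA : in_Omega fA aA.
Proof.
  split; [reflexivity|]. split; [reflexivity|]. split.
  - intros z _. replace (fA z) with (Cpartial aA z 4).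
    apply poly_series. intros n Hn. do 4 (destruct n; [lia|]). reflexivity.
    destruct z. unfold fA, Cpartial, aA, Cpow, Cadd, Cmul, Csc, C0, C1; simpl; f_equal; field.
  - intros z Hz. exists (Cadd C1 z). split.
    + intros eps He. exists (2 * eps). split; [lra|]. intros h [Hh1 Hh2].
      replace (Csub (Csub (fA (Cadd z h)) (fA z)) (Cmul (Cadd C1 z) h)) with (Csc (/2) (Cmul h h)).
      rewrite Cnorm_Csc, Cnorm_sqr, Rabs_pos_eq by lra. nra.
      destruct z, h. unfold fA, Csub, Cadd, Copp, Cmul, Csc, C1; simpl; f_equal; field.
    + replace (Csub (Cmul z (Cadd C1 z)) (fA z)) with (Csc (/2) (Cmul z z)).
      rewrite Cnorm_Csc, Cnorm_sqr, Rabs_pos_eq by lra. pose proof (Cnorm_ge0 z). nra.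
      destruct z. unfold fA, Csub, Cadd, Copp, Cmul, Csc, C1; simpl; f_equal; field.
Qed.

Lemma omegaB : in_Omega fB aB.
Proof.
  split; [reflexivity|]. split; [reflexivity|]. split.
  - intros z _. replace (fB z) with (Cpartial aB z 4).
    apply poly_series. intros n Hn. do 4 (destruct n; [lia|]). reflexivity.
    destruct z. unfold fB, Cpartial, aB, Cpow, Cadd, Cmul, Csc, C0, C1; simpl; f_equal; field.
  - intros z Hz. exists (Cadd C1 (Csc (3/4) (Cmul z z))). split.
    + intros eps He. exists (Rmin 1 eps). split; [apply Rmin_glb_lt; lra|]. intros h [Hh1 Hh2].
      assert (Hm1 := Rmin_l 1 eps). assert (Hm2 := Rmin_r 1 eps).
      replace (Csub (Csub (fB (Cadd z h)) (fB z)) (Cmul (Cadd C1 (Csc (3/4) (Cmul z z))) h))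
        with (Csc (/4) (Cmul (Cmul h h) (Cadd (Csc 3 z) h))).
      rewrite Cnorm_Csc, Cnorm_mul, Cnorm_sqr, Rabs_pos_eq by lra.
      pose proof (Cnorm_add (Csc 3 z) h). rewrite Cnorm_Csc, (Rabs_pos_eq 3) in H by lra.
      pose proof (Cnorm_ge0 z). pose proof (Cnorm_ge0 (Cadd (Csc 3 z) h)).
      assert (Cnorm (Cadd (Csc 3 z) h) <= 4) by lra.
      assert (Cnorm h <= eps) by lra.
      set (nh := Cnorm h) in *. set (w := Cnorm (Cadd (Csc 3 z) h)) in *.
      assert (nh * nh * w <= nh * nh * 4) by (apply Rmult_le_compat_l; nra).
      nra.
      destruct z, h. unfold fB, Csub, Cadd, Copp, Cmul, Csc, C1; simpl; f_equal; field.
    + replace (Csub (Cmul z (Cadd C1 (Csc (3/4) (Cmul z z)))) (fB z)) with (Csc (/2) (Cmul z (Cmul z z))).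
      rewrite Cnorm_Csc, Cnorm_mul, Cnorm_sqr, Rabs_pos_eq by lra. pose proof (Cnorm_ge0 z).
      assert (Cnorm z * (Cnorm z * Cnorm z) < 1).
      { assert (Cnorm z * Cnorm z < 1) by nra. nra. }
      nra.
      destruct z. unfold fB, Csub, Cadd, Copp, Cmul, Csc, C1; simpl; f_equal; field.
Qed.

Lemma lower mu : exists (f : Cplx -> Cplx) (a : nat -> Cplx), in_Omega f a /\
     Cnorm (Csub (a 3%nat) (Cmul mu (Cmul (a 2%nat) (a 2%nat)))) = / 4 * Rmax 1 (Cnorm mu).
Proof.
  destruct (Rle_dec 1 (Cnorm mu)) as [H|H].
  - exists fA, aA. split; [apply omegaA|]. rewrite Rmax_right by lra.
    replace (Csub (aA 3%nat) (Cmul mu (Cmul (aA 2%nat) (aA 2%nat)))) with (Csc (- / 4) mu).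
    rewrite Cnorm_Csc. rewrite Rabs_left by lra. ring.
    destruct mu. unfold aA, Csub, Cadd, Copp, Cmul, Csc, C0; simpl; f_equal; field.
  - exists fB, aB. split; [apply omegaB|]. rewrite Rmax_left by lra.
    replace (Csub (aB 3%nat) (Cmul mu (Cmul (aB 2%nat) (aB 2%nat)))) with ((/4, 0) : Cplx).
    rewrite Cnorm_real by lra. ring.
    destruct mu. unfold aB, Csub, Cadd, Copp, Cmul, Csc, C0; simpl; f_equal; field.
Qed.

Theorem theorem6p2 (mu : Cplx) :
  (forall (f : Cplx -> Cplx) (a : nat -> Cplx), in_Omega f a ->
     Cnorm (Csub (a 3%nat) (Cmul mu (Cmul (a 2%nat) (a 2%nat)))) <= / 4 * Rmax 1 (Cnorm mu))
  /\
  (exists (f : Cplx -> Cplx) (a : nat -> Cplx), in_Omega f a /\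
     Cnorm (Csub (a 3%nat) (Cmul mu (Cmul (a 2%nat) (a 2%nat)))) = / 4 * Rmax 1 (Cnorm mu)).
Proof.
  split.
  - intros f a HO. exact (upper f a mu HO).
  - apply lower.
Qed.
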